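(* Let $\mathtt{W}_1',\mathtt{W}_2'\in\mathcal{U}^\ast$ be words, $j_1,j_2\in\mathbb{Z}_{>0}$, and $n_1,n_2\in\mathbb{Z}_{\geq0}$, and put $\mathtt{W}_1=\mathtt{W}_1'u_{j_1}u_0^{n_1}$, $\mathtt{W}_2=\mathtt{W}_2'u_{j_2}u_0^{n_2}$. Then \begin{align*} \mathtt{W}_1\ast\mathtt{W}_2 =& \sum_{\substack{0\le k\le j\le n_2\\ 0\le\varepsilon\le\min\{1,n_2-j\}}}\binom{n_1+k}{n_1}\binom{n_1}{j-k}\left(\mathtt{W}_1'\ast\mathtt{W}_2'u_{j_2}u_0^{n_2-j-\varepsilon}\right)u_{j_1}u_0^{n_1+k}\\ &+\sum_{\substack{0\le k\le j\le n_1\\ 0\le\varepsilon\le\min\{1,n_1-j\}}}\binom{n_2+k}{n_2}\binom{n_2}{j-k}\left(\mathtt{W}_1'u_{j_1}u_0^{n_1-j-\varepsilon}\ast\mathtt{W}_2'\right)u_{j_2}u_0^{n_2+k}\\ &+\sum_{k=0}^{n_2}\binom{n_1+k}{n_1}\binom{n_1}{n_2-k}(\mathtt{W}_1'\ast\mathtt{W}_2')u_{j_1+j_2}u_0^{n_1+k}. \end{align*}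
   Context: Let $\mathcal{U}=\{u_j\mid j\in\mathbb{Z}_{\geq0}\}$ be an alphabet; $\mathcal{U}^\ast$ is the set of words (finite concatenations of letters, including the empty word $\mathbf{1}$), and $\mathbb{Q}\langle\mathcal{U}\rangle$ is the $\mathbb{Q}$-vector space with basis $\mathcal{U}^\ast$, with concatenation extended bilinearly; $u_0^n$ denotes the word consisting of $n$ copies of $u_0$. The stuffle product $\ast$ on $\mathbb{Q}\langle\mathcal{U}\rangle$ is the $\mathbb{Q}$-bilinear product with $\mathbf{1}\ast\mathtt{W}=\mathtt{W}\ast\mathbf{1}=\mathtt{W}$ and, for $j_1,j_2\in\mathbb{Z}_{\ge0}$ and words $\mathtt{W}_1,\mathtt{W}_2$, $u_{j_1}\mathtt{W}_1\ast u_{j_2}\mathtt{W}_2 = u_{j_1}(\mathtt{W}_1\ast u_{j_2}\mathtt{W}_2)+u_{j_2}(u_{j_1}\mathtt{W}_1\ast\mathtt{W}_2)+u_{j_1+j_2}(\mathtt{W}_1\ast\mathtt{W}_2)$. Binomial coefficients $\binom{a}{b}$ with $b<0$ or $b>a$ are $0$. *)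

(* Defs.v *)
From mathcomp Require Import all_boot all_order all_algebra.
Set Implicit Arguments. Unset Strict Implicit. Unset Printing Implicit Defensive.
Import GRing.Theory.
Local Open Scope ring_scope.

(* Letters u_j are encoded by their index j : nat; a word is a seq nat
   (the empty word 1 is [::]).  An element of Q<U> is represented by a
   finite formal sum: a list of (coefficient, word) pairs.  Two such lists
   denote the same element of Q<U> iff they have the same coefficient
   function [qcoef]. *)
Definition word := seq nat.
Definition qpoly := seq (rat * word).

Definition qcoef (p : qpoly) (w : word) : rat :=
  \sum_(x <- p | x.2 == w) x.1.

Definition qeq (p q : qpoly) : Prop := forall w, qcoef p w = qcoef q w.

Definition qscale (c : rat) (p : qpoly) : qpoly := [seq (c * x.1, x.2) | x <- p].
Definition qprepend (a : nat) (p : qpoly) : qpoly := [seq (x.1, a :: x.2) | x <- p].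
Definition qappend (p : qpoly) (w : word) : qpoly := [seq (x.1, x.2 ++ w) | x <- p].

Fixpoint stuffle (a b : word) {struct a} : qpoly :=
  match a with
  | [::] => [:: (1, b)]
  | x :: a' =>
      let fix aux (b : word) : qpoly :=
        match b with
        | [::] => [:: (1, a)]
        | y :: b' => qprepend x (stuffle a' b) ++ qprepend y (aux b')
                     ++ qprepend (x + y) (stuffle a' b')
        end in aux b
  end.

Definition qstuffle (p q : qpoly) : qpoly :=
  flatten [seq qscale (x.1 * y.1) (stuffle x.2 y.2) | x <- p, y <- q].

Definition u0pow (n : nat) : word := nseq n 0%N.

(* Main.v *)
Require Import Defs.
From mathcomp Require Import all_boot all_order all_algebra.
From mathcomp Require Import zify ring lra.
Set Implicit Arguments. Unset Strict Implicit. Unset Printing Implicit Defensive.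
Import GRing.Theory.
Local Open Scope ring_scope.



Lemma SE2 x a y b : stuffle (x::a) (y::b) = qprepend x (stuffle a (y::b)) ++ qprepend y (stuffle (x::a) b) ++ qprepend (x+y) (stuffle a b).
Proof. by []. Qed.
Lemma stuffle_nil a : stuffle a [::] = [:: (1, a)].
Proof. by case: a. Qed.
Lemma stuffle0 b : stuffle [::] b = [:: (1, b)].
Proof. by []. Qed.
Lemma rcons0 (y : nat) : rcons [::] y = [:: y].
Proof. by []. Qed.
Lemma app_pre d s w : qappend (qprepend d s) w = qprepend d (qappend s w).
Proof. by rewrite /qappend /qprepend -!map_comp. Qed.
Lemma pre_cat d s t : qprepend d (s ++ t) = qprepend d s ++ qprepend d t.
Proof. exact: map_cat. Qed.
Lemma app_cat w s t : qappend (s ++ t) w = qappend s w ++ qappend t w.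
Proof. exact: map_cat. Qed.
Lemma pre_perm d s t : perm_eq s t -> perm_eq (qprepend d s) (qprepend d t).
Proof. exact: perm_map. Qed.
Lemma app1 w (z : rat * word) : qappend [:: z] w = [:: (z.1, z.2 ++ w)].
Proof. by []. Qed.
Lemma pre1 d (z : rat * word) : qprepend d [:: z] = [:: (z.1, d :: z.2)].
Proof. by []. Qed.

Lemma RR x y : forall a b, perm_eq (stuffle (rcons a x) (rcons b y))
  (qappend (stuffle a (rcons b y)) [::x] ++ qappend (stuffle (rcons a x) b) [::y]
   ++ qappend (stuffle a b) [::(x+y)%N]).
Proof.
elim=> [|p a IHa] b.
  elim: b => [|q b IHb].
    rewrite !rcons0 SE2 !stuffle0 !stuffle_nil.
    by apply/permP => P /=; lia.
  rewrite rcons0 rcons_cons !SE2 !stuffle0 in IHb *.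
  apply/permP => P; rewrite !count_cat (permP (pre_perm _ IHb)).
  rewrite !pre_cat !app_cat !app_pre !count_cat !app1 !pre1 /= -!cats1 /=; lia.
elim: b => [|q b IHb].
  have H := IHa [::]; rewrite rcons0 !stuffle_nil in H.
  rewrite rcons0 rcons_cons !SE2 !stuffle_nil.
  apply/permP => P; rewrite !count_cat (permP (pre_perm _ H)).
  rewrite !pre_cat !app_cat !app_pre !count_cat !app1 !pre1 /= -!cats1 /=; lia.
have H1 := IHa (q::b); rewrite rcons_cons in H1.
have H3 := IHa b.
rewrite rcons_cons in IHb.
rewrite !rcons_cons !SE2.
apply/permP => P; rewrite !count_cat (permP (pre_perm _ H1)) (permP (pre_perm _ IHb)) (permP (pre_perm _ H3)).
rewrite !pre_cat !app_cat !app_pre !count_cat; lia.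
Qed.



Definition Tc (c : nat) (f : word -> rat) (v : word) : rat :=
  if v is x :: s then (if last x s == c then f (belast x s) else 0) else 0.
Definition Tn (m : nat) (f : word -> rat) : word -> rat := iter m (Tc 0) f.

Lemma qcoef_cat p q w : qcoef (p ++ q) w = qcoef p w + qcoef q w.
Proof. by rewrite /qcoef big_cat. Qed.
Lemma qcoef_scale c p w : qcoef (qscale c p) w = c * qcoef p w.
Proof. by rewrite /qcoef /qscale big_map mulr_sumr. Qed.
Lemma qcoef_perm p q w : perm_eq p q -> qcoef p w = qcoef q w.
Proof. by move=> H; rewrite /qcoef (perm_big _ H). Qed.
Lemma qcoef_flat (T : Type) (F : T -> Defs.qpoly) s w :
  qcoef (flatten [seq F i | i <- s]) w = \sum_(i <- s) qcoef (F i) w.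
Proof.
elim: s => [|x s IH] /=; first by rewrite /qcoef !big_nil.
by rewrite qcoef_cat IH big_cons.
Qed.

Lemma qcoef_app1 p c v : qcoef (qappend p [:: c]) v = Tc c (qcoef p) v.
Proof.
rewrite /qcoef /qappend big_map; case: v => [|y s]; rewrite /Tc /=.
  by rewrite big_pred0 // => -[r [|? ?]].
have E : forall w, (w ++ [:: c] == y :: s) = (w == belast y s) && (last y s == c).
  by move=> w; rewrite cats1 (lastI y s) eqseq_rcons (eq_sym c).
under eq_bigl do rewrite E.
case: ifP => e.
  by under eq_bigl do rewrite andbT.
by rewrite big_pred0 // => z; rewrite andbF.
Qed.

Lemma Tc_ext c f g v : (forall w, f w = g w) -> Tc c f v = Tc c g v.
Proof. by move=> H; case: v => //= x s; rewrite H. Qed.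
Lemma Tc_add c f g v : Tc c (fun w => f w + g w) v = Tc c f v + Tc c g v.
Proof. by case: v => [|x s] /=; [rewrite addr0 | case: ifP; rewrite ?addr0]. Qed.
Lemma Tc_scale c k f v : Tc c (fun w => k * f w) v = k * Tc c f v.
Proof. by case: v => [|x s] /=; [rewrite mulr0 | case: ifP; rewrite ?mulr0]. Qed.
Lemma Tc_sum c n (F : 'I_n -> word -> rat) v :
  Tc c (fun w => \sum_(i < n) F i w) v = \sum_(i < n) Tc c (F i) v.
Proof. by case: v => [|x s] /=; [rewrite big1 | case: ifP => //; rewrite big1]. Qed.
Lemma Tn_ext m f g v : (forall w, f w = g w) -> Tn m f v = Tn m g v.
Proof.
elim: m v => [|m IH] v H /=; first exact: H.
by apply: Tc_ext => w; apply: IH.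
Qed.
Lemma Tn_add m f g v : Tn m (fun w => f w + g w) v = Tn m f v + Tn m g v.
Proof.
elim: m v => [|m IH] v //=.
by rewrite (@Tc_ext _ _ _ _ IH) Tc_add.
Qed.
Lemma TnS m f v : Tn m.+1 f v = Tc 0 (Tn m f) v.
Proof. by []. Qed.

Lemma nseqSr n (x : nat) : nseq n.+1 x = rcons (nseq n x) x.
Proof. by elim: n => //= n ->. Qed.
Lemma word_rcons W j n : W ++ j :: u0pow n.+1 = rcons (W ++ j :: u0pow n) 0%N.
Proof. by rewrite rcons_cat rcons_cons /u0pow nseqSr. Qed.

Lemma qcoef_u0 P j m v : qcoef (qappend P (j :: u0pow m)) v = Tn m (qcoef (qappend P [:: j])) v.
Proof.
elim: m v => [|m IH] v //.
have -> : qappend P (j :: u0pow m.+1) = qappend (qappend P (j :: u0pow m)) [:: 0%N].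
  rewrite /qappend -map_comp; apply: eq_map => z /=.
  by rewrite -catA /= -[0%N :: u0pow m]/(nseq m.+1 0%N) nseqSr cats1.
by rewrite qcoef_app1 TnS (@Tc_ext _ _ _ _ IH).
Qed.



Definition Q (a r : nat) (f : word -> rat) : word -> rat :=
  fun v => \sum_(k < r.+1) ('C(a + k, a) * 'C(a, r - k))%:R * Tn (a + k) f v.
Definition cfn (a r k : nat) : nat := (if (k <= r)%N then 'C(a + k, a) * 'C(a, r - k) else 0)%N.

Lemma widen a r N (g : nat -> rat) : (r < N)%N ->
  \sum_(k < r.+1) ('C(a + k, a) * 'C(a, r - k))%:R * g k = \sum_(k < N) (cfn a r k)%:R * g k.
Proof.
move=> rN; rewrite (big_ord_widen _ (fun k => ('C(a + k, a) * 'C(a, r - k))%:R * g k) rN).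
rewrite big_mkcond /=; apply: eq_bigr => k _; rewrite /cfn ltnS.
by case: ifP => _; rewrite ?mul0r.
Qed.

Lemma cfn_rec a r k : cfn a.+1 r.+1 k.+1 = (cfn a r.+1 k.+1 + cfn a.+1 r k + cfn a r k.+1)%N.
Proof.
rewrite /cfn !ltnS.
case: (leqP k r) => kr; last by rewrite ltnNge (ltnW kr).
rewrite !subSS.
have -> : (a.+1 + k.+1 = (a + k.+1).+1)%N by rewrite addSn.
have -> : (a.+1 + k = a + k.+1)%N by rewrite addSnnS.
rewrite binS.
case: (ltnP k r) => kr2.
  have -> : (r - k = (r - k.+1).+1)%N by rewrite subnSK.
  rewrite binS; ring.
have -> : r = k by apply/eqP; rewrite eqn_leq kr kr2.
rewrite subnn !bin0; ring.
Qed.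

Lemma TQ c a r f v : Tc c (Q a r f) v = \sum_(k < r.+1) ('C(a + k, a) * 'C(a, r - k))%:R * Tc c (Tn (a + k) f) v.
Proof. by rewrite /Q Tc_sum; apply: eq_bigr => k _; rewrite Tc_scale. Qed.

Lemma shift1 N (c : nat -> nat) (t : nat -> rat) a :
  \sum_(k < N) (c k)%:R * t (a + k)%N.+1 = \sum_(i < N.+1) (if nat_of_ord i is k.+1 then c k else 0%N)%:R * t (a + i)%N.
Proof.
rewrite big_ord_recl /= mul0r add0r; apply: eq_bigr => i _.
rewrite /bump leq0n add0n add1n. by rewrite addnS.
Qed.

Lemma Qrec a r f v : Q a.+1 r.+1 f v = Tc 0 (Q a r.+1 f) v + Tc 0 (Q a.+1 r f) v + Tc 0 (Q a r f) v.
Proof.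
pose t := fun i => Tn i f v.
have L1 : Q a.+1 r.+1 f v = \sum_(i < r.+4) (if nat_of_ord i is k.+1 then cfn a.+1 r.+1 k else 0%N)%:R * t (a + i)%N.
  rewrite -shift1 /Q; exact: (@widen a.+1 r.+1 r.+3 (fun k => t (a + k)%N.+1) (leqW (leqnn _))).
have R1 : Tc 0 (Q a r.+1 f) v = \sum_(i < r.+4) (if nat_of_ord i is k.+1 then cfn a r.+1 k else 0%N)%:R * t (a + i)%N.
  rewrite TQ -shift1 /Q; exact: (@widen a r.+1 r.+3 (fun k => t (a + k)%N.+1) (leqW (leqnn _))).
have R3 : Tc 0 (Q a r f) v = \sum_(i < r.+4) (if nat_of_ord i is k.+1 then cfn a r k else 0%N)%:R * t (a + i)%N.
  rewrite TQ -shift1 /Q; exact: (@widen a r r.+3 (fun k => t (a + k)%N.+1) (leqW (leqW (leqnn _)))).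
have R2 : Tc 0 (Q a.+1 r f) v = \sum_(i < r.+4) (if nat_of_ord i is i'.+1 then (if i' is k.+1 then cfn a.+1 r k else 0%N) else 0%N)%:R * t (a + i)%N.
  rewrite TQ -shift1.
  have -> : \sum_(i < r.+3) (if nat_of_ord i is k.+1 then cfn a.+1 r k else 0%N)%:R * t (a + i)%N.+1
     = \sum_(i < r.+3) (if nat_of_ord i is k.+1 then cfn a.+1 r k else 0%N)%:R * t (a.+1 + i)%N by [].
  rewrite -shift1; exact: (@widen a.+1 r r.+2 (fun k => t (a.+1 + k)%N.+1) (leqW (leqnn _))).
rewrite L1 R1 R2 R3 -!big_split; apply: eq_bigr => -[i ii] _ /=; case: i ii => [|[|k]] ii /=; rewrite ?mul0r ?addr0 //.
  rewrite -!mulrDl -!natrD /cfn /= !addn0 !subn0 !binn !mul1n.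
  by rewrite binS.
by rewrite -!mulrDl -!natrD cfn_rec.
Qed.

Lemma Q0r r f v : Q 0 r f v = Tn r f v.
Proof.
rewrite /Q big_ord_recr /= big1 ?add0r; last first.
  move=> i _; rewrite bin0n subn_eq0 leqNgt ltn_ord /= muln0 mul0r //.
by rewrite subnn bin0 bin0n muln1 mul1r add0n.
Qed.
Lemma Qa0 a f v : Q a 0 f v = Tn a f v.
Proof. by rewrite /Q big_ord1 /= addn0 binn bin0 mul1n mul1r. Qed.
Lemma QS0 r f v : Q 0 r.+1 f v = Tc 0 (Q 0 r f) v.
Proof. by rewrite Q0r TnS; apply: Tc_ext => w; rewrite Q0r. Qed.
Lemma QSa a f v : Q a.+1 0 f v = Tc 0 (Q a 0 f) v.
Proof. by rewrite Qa0 TnS; apply: Tc_ext => w; rewrite Qa0. Qed.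

Definition Gen (a b : nat) (W : nat -> word -> rat) : word -> rat :=
  fun v => \sum_(j < b.+1) Q a j (W (b - j)%N) v.

Lemma lift0n n (i : 'I_n) : (lift ord0 i : nat) = i.+1.
Proof. by []. Qed.

Lemma G0 W v : Gen 0 0 W v = W 0%N v.
Proof. by rewrite /Gen big_ord1 Q0r. Qed.
Lemma G2 b W v : Gen 0 b.+1 W v = Tc 0 (Gen 0 b W) v + W b.+1 v.
Proof.
rewrite /Gen Tc_sum big_ord_recl Q0r subn0 addrC; congr (_ + _).
by apply: eq_bigr => j _; rewrite lift0n subSS QS0.
Qed.
Lemma G3 a W v : Gen a.+1 0 W v = Tc 0 (Gen a 0 W) v.
Proof. by rewrite /Gen Tc_sum !big_ord1 QSa. Qed.
Lemma G1 a b W v : Gen a.+1 b.+1 W v =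
  Tc 0 (Gen a b.+1 W) v + Tc 0 (Gen a.+1 b W) v + Tc 0 (Gen a b W) v.
Proof.
rewrite /Gen !Tc_sum big_ord_recl [in X in _ = X + _ + _]big_ord_recl !subn0 QSa.
have -> : \sum_(i < b.+1) Q a.+1 (lift ord0 i) (W (b.+1 - lift ord0 i)%N) v =
  \sum_(i < b.+1) (Tc 0 (Q a (lift ord0 i) (W (b.+1 - lift ord0 i)%N)) v
     + Tc 0 (Q a.+1 i (W (b - i)%N)) v + Tc 0 (Q a i (W (b - i)%N)) v).
  by apply: eq_bigr => i _; rewrite !lift0n subSS Qrec.
rewrite !big_split /=; ring.
Qed.



Definition Xf W1 W2 (j1 j2 s : nat) := qcoef (qappend (stuffle W1 (W2 ++ j2 :: u0pow s)) [:: j1]).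
Definition Yf W1 W2 (j1 j2 s : nat) := qcoef (qappend (stuffle (W1 ++ j1 :: u0pow s) W2) [:: j2]).
Definition Zf W1 W2 (j1 j2 : nat) := qcoef (qappend (stuffle W1 W2) [:: (j1 + j2)%N]).
Definition Wf (X : nat -> word -> rat) (s : nat) : word -> rat :=
  if s is s'.+1 then (fun v => X s v + X s' v) else X 0%N.
Lemma WfS X s v : Wf X s.+1 v = X s.+1 v + X s v. Proof. by []. Qed.

Lemma RRq x y a b v : qcoef (stuffle (rcons a x) (rcons b y)) v =
  Tc x (qcoef (stuffle a (rcons b y))) v + Tc y (qcoef (stuffle (rcons a x) b)) v
  + Tc (x + y)%N (qcoef (stuffle a b)) v.
Proof. by rewrite (qcoef_perm _ (RR x y a b)) !qcoef_cat !qcoef_app1 addrA. Qed.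

Lemma stepSS W1 W2 j1 j2 a b v :
  qcoef (stuffle (W1 ++ j1 :: u0pow a.+1) (W2 ++ j2 :: u0pow b.+1)) v =
  Tc 0 (qcoef (stuffle (W1 ++ j1 :: u0pow a) (W2 ++ j2 :: u0pow b.+1))) v
  + Tc 0 (qcoef (stuffle (W1 ++ j1 :: u0pow a.+1) (W2 ++ j2 :: u0pow b))) v
  + Tc 0 (qcoef (stuffle (W1 ++ j1 :: u0pow a) (W2 ++ j2 :: u0pow b))) v.
Proof. by rewrite !word_rcons RRq. Qed.

Lemma step0S W1 W2 j1 j2 b v :
  qcoef (stuffle (W1 ++ j1 :: u0pow 0) (W2 ++ j2 :: u0pow b.+1)) v =
  Xf W1 W2 j1 j2 b.+1 v + Tc 0 (qcoef (stuffle (W1 ++ j1 :: u0pow 0) (W2 ++ j2 :: u0pow b))) v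
  + Xf W1 W2 j1 j2 b v.
Proof.
have E : W1 ++ j1 :: u0pow 0 = rcons W1 j1 by rewrite cats1.
by rewrite /Xf !qcoef_app1 E word_rcons RRq -word_rcons addn0.
Qed.

Lemma stepS0 W1 W2 j1 j2 a v :
  qcoef (stuffle (W1 ++ j1 :: u0pow a.+1) (W2 ++ j2 :: u0pow 0)) v =
  Tc 0 (qcoef (stuffle (W1 ++ j1 :: u0pow a) (W2 ++ j2 :: u0pow 0))) v
  + Yf W1 W2 j1 j2 a.+1 v + Yf W1 W2 j1 j2 a v.
Proof.
have E : W2 ++ j2 :: u0pow 0 = rcons W2 j2 by rewrite cats1.
by rewrite /Yf !qcoef_app1 E word_rcons RRq -word_rcons add0n.
Qed.

Lemma step00 W1 W2 j1 j2 v :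
  qcoef (stuffle (W1 ++ j1 :: u0pow 0) (W2 ++ j2 :: u0pow 0)) v =
  Xf W1 W2 j1 j2 0 v + Yf W1 W2 j1 j2 0 v + Zf W1 W2 j1 j2 v.
Proof.
have E1 : W1 ++ j1 :: u0pow 0 = rcons W1 j1 by rewrite cats1.
have E2 : W2 ++ j2 :: u0pow 0 = rcons W2 j2 by rewrite cats1.
by rewrite /Xf /Yf /Zf !qcoef_app1 E1 E2 RRq.
Qed.

Lemma main W1 W2 j1 j2 n1 n2 v :
  qcoef (stuffle (W1 ++ j1 :: u0pow n1) (W2 ++ j2 :: u0pow n2)) v =
  Gen n1 n2 (Wf (Xf W1 W2 j1 j2)) v + Gen n2 n1 (Wf (Yf W1 W2 j1 j2)) v
  + Q n1 n2 (Zf W1 W2 j1 j2) v.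
Proof.
elim: n1 n2 v => [|a IHa] n2 v; elim: n2 v => [|b IHb] v.
- by rewrite step00 !G0 Qa0.
- rewrite step0S G2 G3 QS0 (@Tc_ext _ _ _ _ IHb) !Tc_add WfS; ring.
- rewrite stepS0 G3 G2 QSa (@Tc_ext _ _ _ _ (IHa 0%N)) !Tc_add WfS; ring.
- rewrite stepSS (@Tc_ext _ _ _ _ (IHa b.+1)) (@Tc_ext _ _ _ _ IHb) (@Tc_ext _ _ _ _ (IHa b)).
  rewrite !Tc_add !G1 Qrec; ring.
Qed.



Lemma iota_ord n (F : nat -> rat) : \sum_(j <- iota 0 n) F j = \sum_(j < n) F j.
Proof. by rewrite -(big_mkord xpredT) /index_iota subn0. Qed.

Lemma minn1S s : minn 1 s.+1 = 1%N.
Proof. by case: s. Qed.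

Lemma block1 W1' W2' j1 j2 n1 n2 w :
  qcoef (flatten [seq flatten [seq flatten [seq
        qscale ('C(n1 + k, n1) * 'C(n1, j - k))%:R
          (qappend (stuffle W1' (W2' ++ j2 :: u0pow (n2 - j - e)))
                   (j1 :: u0pow (n1 + k)))
        | e <- iota 0 (minn 1 (n2 - j)).+1]
        | k <- iota 0 j.+1]
        | j <- iota 0 n2.+1]) w = Gen n1 n2 (Wf (Xf W1' W2' j1 j2)) w.
Proof.
rewrite qcoef_flat iota_ord /Gen; apply: eq_bigr => j _.
rewrite qcoef_flat iota_ord /Q; apply: eq_bigr => k _.
rewrite qcoef_flat; under eq_bigr do rewrite qcoef_scale qcoef_u0.
case: (n2 - j)%N => [|s].
  by rewrite /= big_seq1.
rewrite minn1S /= big_cons big_seq1 subn0 subSS subn0 Tn_add mulrDr.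
by [].
Qed.

Lemma block2 W1' W2' j1 j2 n1 n2 w :
  qcoef (flatten [seq flatten [seq flatten [seq
        qscale ('C(n2 + k, n2) * 'C(n2, j - k))%:R
          (qappend (stuffle (W1' ++ j1 :: u0pow (n1 - j - e)) W2')
                   (j2 :: u0pow (n2 + k)))
        | e <- iota 0 (minn 1 (n1 - j)).+1]
        | k <- iota 0 j.+1]
        | j <- iota 0 n1.+1]) w = Gen n2 n1 (Wf (Yf W1' W2' j1 j2)) w.
Proof.
rewrite qcoef_flat iota_ord /Gen; apply: eq_bigr => j _.
rewrite qcoef_flat iota_ord /Q; apply: eq_bigr => k _.
rewrite qcoef_flat; under eq_bigr do rewrite qcoef_scale qcoef_u0.
case: (n1 - j)%N => [|s].
  by rewrite /= big_seq1.
rewrite minn1S /= big_cons big_seq1 subn0 subSS subn0 Tn_add mulrDr.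
by [].
Qed.

Lemma block3 W1' W2' j1 j2 n1 n2 w :
  qcoef (flatten [seq
        qscale ('C(n1 + k, n1) * 'C(n1, n2 - k))%:R
          (qappend (stuffle W1' W2') ((j1 + j2)%N :: u0pow (n1 + k)))
        | k <- iota 0 n2.+1]) w = Q n1 n2 (Zf W1' W2' j1 j2) w.
Proof.
rewrite qcoef_flat iota_ord /Q; apply: eq_bigr => k _.
by rewrite qcoef_scale qcoef_u0.
Qed.

Theorem lemma2p2 (W1' W2' : word) (j1 j2 n1 n2 : nat) :
  (0 < j1)%N -> (0 < j2)%N ->
  qeq (stuffle (W1' ++ j1 :: u0pow n1) (W2' ++ j2 :: u0pow n2))
    (flatten [seq flatten [seq flatten [seq
        qscale ('C(n1 + k, n1) * 'C(n1, j - k))%:R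
          (qappend (stuffle W1' (W2' ++ j2 :: u0pow (n2 - j - e)))
                   (j1 :: u0pow (n1 + k)))
        | e <- iota 0 (minn 1 (n2 - j)).+1]
        | k <- iota 0 j.+1]
        | j <- iota 0 n2.+1]
     ++ flatten [seq flatten [seq flatten [seq
        qscale ('C(n2 + k, n2) * 'C(n2, j - k))%:R
          (qappend (stuffle (W1' ++ j1 :: u0pow (n1 - j - e)) W2')
                   (j2 :: u0pow (n2 + k)))
        | e <- iota 0 (minn 1 (n1 - j)).+1]
        | k <- iota 0 j.+1]
        | j <- iota 0 n1.+1]
     ++ flatten [seq
        qscale ('C(n1 + k, n1) * 'C(n1, n2 - k))%:R
          (qappend (stuffle W1' W2') ((j1 + j2)%N :: u0pow (n1 + k)))
        | k <- iota 0 n2.+1]).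
Proof.
move=> _ _ w.
rewrite main [RHS]qcoef_cat [X in _ = _ + X]qcoef_cat addrA.
congr (_ + _ + _).
- by rewrite block1.
- by rewrite block2.
- by rewrite block3.
Qed.
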